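(* For every integer $k \geq 2$ there is a constant $\alpha_k$ with $2k-1 < \alpha_k < 2k - \tfrac{1}{2}$ such that the number of palstars of length $2n$ over a $k$-letter alphabet is $\Theta(\alpha_k^n)$ as $n \to \infty$.
   Context: Let $\Sigma_k$ be an alphabet with $k$ letters and let $P = \{ x x^R : x \in \Sigma_k^+\}$ be the set of nonempty even-length palindromes over $\Sigma_k$ (here $x^R$ is the reversal of $x$). A palstar is an element of $P^* = \bigcup_{i\ge 0} P^i$, i.e. a (possibly empty) concatenation of nonempty even-length palindromes. *)

(* Defs.v *)
From HB Require Import structures.
From mathcomp Require Import all_boot all_order all_algebra.
From mathcomp Require Import boolp reals.
Set Implicit Arguments. Unset Strict Implicit. Unset Printing Implicit Defensive.

Definition even_pal (k : nat) (w : seq 'I_k) : Prop :=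
  exists x : seq 'I_k, x != [::] /\ w = x ++ rev x.

Definition palstar (k : nat) (w : seq 'I_k) : Prop :=
  exists ws : seq (seq 'I_k), (forall u, u \in ws -> even_pal u) /\ w = flatten ws.

Definition num_palstars (k m : nat) : nat :=
  #|[set t : m.-tuple 'I_k | `[< palstar (val t) >]]|.

(* Main.v *)
Require Import Defs.
From HB Require Import structures.
From mathcomp Require Import all_boot all_order all_algebra.
From mathcomp Require Import boolp reals.
From mathcomp Require Import zify ring lra.
From mathcomp Require Import classical_sets.
Set Implicit Arguments. Unset Strict Implicit. Unset Printing Implicit Defensive.

Section Pal.
Variables (T : eqType) (x0 : T).
Implicit Types u v w x y z : seq T.

Definition epal0 w := ~~ odd (size w) && (rev w == w).
Definition epal w := (w != [::]) && epal0 w.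
Definition Qm w := epal w && all (fun i => ~~ epal (take i w)) (iota 1 (size w).-1).
Definition Rp u z := epal0 (take (size z - size u) z) && (drop (size z - size u) z == u).

Lemma palP w : reflect (forall p, p < size w -> nth x0 w p = nth x0 w (size w - p.+1))
  (rev w == w).
Proof.
apply: (iffP eqP) => [H p Hp|H].
  by rewrite -[in LHS]H nth_rev.
apply: (@eq_from_nth _ x0); first by rewrite size_rev.
move=> i Hi; rewrite size_rev in Hi; by rewrite nth_rev // [RHS]H.
Qed.

Lemma QmE w : Qm w -> epal w /\ forall i, 0 < i < size w -> ~~ epal (take i w).
Proof.
case/andP=> He /allP Ha; split=> // i /andP[i0 iw]; apply: Ha.
rewrite mem_iota; lia.
Qed.

Lemma QmI w : epal w -> (forall i, 0 < i < size w -> ~~ epal (take i w)) -> Qm w.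
Proof.
move=> He Ha; rewrite /Qm He /=; apply/allP=> i; rewrite mem_iota => Hi.
apply: Ha; lia.
Qed.

Lemma epal_size w : epal w -> 0 < size w /\ ~~ odd (size w).
Proof.
case/andP=> /eqP Hn /andP[Ho _]; split=> //.
by case: w Hn {Ho}.
Qed.

Lemma epal_rev w : epal0 w -> rev w = w.
Proof. by case/andP=> _ /eqP. Qed.

Lemma Q_uniq w i j : i <= size w -> j <= size w ->
  Qm (take i w) -> Qm (take j w) -> i = j.
Proof.
move=> Hi Hj Qi Qj.
wlog lt_ij : i j Hi Hj Qi Qj / i < j.
  move=> Hw; case: (ltngtP i j) => [h|h|//]; first exact: Hw.
  by apply/esym/Hw.
have [Hpi _] := epal_size (proj1 (QmE Qi)).
rewrite size_takel // in Hpi.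
have [_ H] := QmE Qj.
have := H i; rewrite size_takel // take_takel ?(ltnW lt_ij) // Hpi lt_ij => /(_ isT).
by rewrite (proj1 (QmE Qi)).
Qed.

Lemma palnth w p : rev w = w -> p < size w -> nth x0 w p = nth x0 w (size w - p.+1).
Proof. by move=> H Hp; rewrite -[in LHS]H nth_rev. Qed.

Lemma nonQ_split v : epal v -> ~~ Qm v ->
  exists l, [/\ 0 < l, l.*2 <= size v, Qm (take l v),
     epal0 (take (size v - l.*2) (drop l v)) & drop (size v - l) v = take l v].
Proof.
move=> Hv nQ.
have ex : exists l, (0 < l < size v) && epal (take l v).
  move: nQ; rewrite /Qm Hv /= => /allPn [i]; rewrite mem_iota => Hi.
  rewrite negbK => He; exists i; rewrite He andbT; apply/andP; lia.
case: (ex_minnP ex) => l /andP[/andP[l0 lv] Hl] Hmin.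
have [szv odv] := epal_size Hv.
have rv : rev v = v by case/andP: Hv => _ /andP[_ /eqP].
have szu : size (take l v) = l by rewrite size_takel // ltnW.
have [_ odl] := epal_size Hl; rewrite szu in odl.
have ru : rev (take l v) = take l v by case/andP: Hl => _ /andP[_ /eqP].
have nu : forall p, p < l -> nth x0 v p = nth x0 v (l - p.+1).
  move=> p pl; have := palnth (p := p) ru; rewrite szu => /(_ pl).
  by rewrite !nth_take //; lia.
have nv : forall p, p < size v -> nth x0 v p = nth x0 v (size v - p.+1).
  by move=> p; apply: palnth.
have Qu : Qm (take l v).
  apply: QmI => // i; rewrite szu => /andP[i0 il].
  rewrite take_takel ?(ltnW il) //; apply/negP => Hi.
  have := Hmin i; rewrite i0 Hi (ltn_trans il lv) /= => /(_ isT); lia.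
have l2 : l.*2 <= size v.
  rewrite leqNgt; apply/negP => H2.
  set m := l.*2 - size v.
  have mv : m <= size v by rewrite /m; lia.
  have Hm : epal (take m v).
    apply/andP; split.
      by rewrite -size_eq0 size_takel // /m; lia.
    apply/andP; split; first by rewrite size_takel // /m; lia.
    apply/palP => p pm; rewrite size_takel // in pm *.
    rewrite !nth_take; try lia.
    rewrite nu; last lia.
    rewrite nv; last lia.
    rewrite nu; last lia.
    congr nth; rewrite /m; lia.
  have := Hmin m; rewrite Hm andbT.
  have -> : (0 < m < size v) by apply/andP; rewrite /m; lia.
  move=> /(_ isT); rewrite /m; lia.
exists l; split => //.
- apply/andP; split.
    rewrite size_takel ?size_drop; lia.
  apply/palP => p Hp; rewrite size_takel ?size_drop in Hp *; try lia.
  rewrite !nth_take; try lia.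
  rewrite !nth_drop nv; last lia.
  congr nth; lia.
- apply: (@eq_from_nth _ x0); first by rewrite size_drop szu; lia.
  move=> p Hp; rewrite size_drop in Hp.
  rewrite nth_drop nth_take; last lia.
  rewrite nv; last lia.
  rewrite nu; last lia.
  congr nth; lia.
Qed.

Lemma split_nonQ v l : 0 < l -> l.*2 <= size v -> Qm (take l v) ->
  Rp (take l v) (drop l v) -> epal v && ~~ Qm v.
Proof.
move=> l0 l2 Qu /andP[Hy /eqP Hd].
have szu : size (take l v) = l by rewrite size_takel //; lia.
rewrite szu size_drop in Hy Hd.
set y := take _ _ in Hy Hd.
have Ev : v = take l v ++ y ++ take l v.
  by rewrite -{2}Hd /y !cat_take_drop.
have [Hu _] := QmE Qu.
have ru := epal_rev (proj2 (andP Hu)).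
have ry := epal_rev Hy.
have [_ odu] := epal_size Hu.
have Hev : epal v.
  apply/andP; split.
    by rewrite -size_eq0; lia.
  apply/andP; split.
    rewrite Ev !size_cat; move: Hy => /andP[oy _]; move: odu; rewrite szu; lia.
  by rewrite Ev !rev_cat ru ry catA.
rewrite Hev /=; apply/negP => /QmE [_ /(_ l)].
by rewrite l0 /=; move=> /(_ ltac:(lia)); rewrite Hu.
Qed.

Lemma epal0_half w n : size w = n.*2 -> epal0 w = (drop n w == rev (take n w)).
Proof.
move=> Hs; rewrite /epal0 Hs odd_double /=.
have s1 : size (take n w) = n by rewrite size_takel // Hs; lia.
have s2 : size (drop n w) = n by rewrite size_drop Hs; lia.
have Ew := esym (cat_take_drop n w).
set x := take n w in Ew s1 *; set y := drop n w in Ew s2 *.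
rewrite {1 2}Ew rev_cat eqseq_cat; last by rewrite size_rev s1 s2.
apply/andP/eqP => [[/eqP H1 _]|H]; first by rewrite -H1 revK.
by rewrite H revK !eqxx.
Qed.

Lemma epalE w : epal w <-> exists x, x != [::] /\ w = x ++ rev x.
Proof.
split.
  move=> Hw; have [sz od] := epal_size Hw.
  set n := (size w)./2.
  have Hs : size w = n.*2 by rewrite /n; lia.
  have := proj2 (andP Hw); rewrite (epal0_half Hs) => /eqP Hd.
  exists (take n w); split.
    by rewrite -size_eq0 size_takel; lia.
  by rewrite -Hd cat_take_drop.
case=> x [xn ->]; apply/andP; split.
  by move: xn; case: x.
apply/andP; split.
  by rewrite size_cat size_rev addnn odd_double.
by rewrite rev_cat revK.
Qed.

End Pal.

Lemma countE (A : Type) (a : pred A) s : count a s = \sum_(x <- s) a x.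
Proof. by elim: s => [|x s IH]; rewrite ?big_nil ?big_cons //= IH. Qed.

Lemma count_has_le (A I : Type) (f : I -> pred A) (s : seq I) (t : seq A) :
  count (fun w => has (f^~ w) s) t <= \sum_(i <- s) count (f i) t.
Proof.
rewrite countE (eq_bigr (fun i => \sum_(w <- t) f i w)); last by move=> i _; rewrite countE.
rewrite exchange_big /=; apply: leq_sum => w _.
rewrite -countE has_count; case: (count _ _) => //.
Qed.

Lemma count_le1 (I : eqType) (f : pred I) (s : seq I) : uniq s ->
  (forall i j, i \in s -> j \in s -> f i -> f j -> i = j) -> count f s <= 1.
Proof.
elim: s => [//|i s IH] /= /andP[ni us] H.
have sub : forall x, x \in s -> x \in i :: s by move=> x hx; rewrite inE hx orbT.
have IH' := IH us (fun a b ha hb => H a b (sub a ha) (sub b hb)).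
case fi: (f i) => //=.
rewrite (_ : count f s = 0) //; apply/eqP; rewrite -leqn0 leqNgt -has_count.
apply/hasP => [[j js fj]]; have ij := H i j (mem_head _ _) (sub j js) fi fj.
by move: ni; rewrite ij js.
Qed.

Lemma count_has_eq (A I : eqType) (f : I -> pred A) (s : seq I) (t : seq A) :
  uniq s -> (forall w i j, w \in t -> i \in s -> j \in s -> f i w -> f j w -> i = j) ->
  count (fun w => has (f^~ w) s) t = \sum_(i <- s) count (f i) t.
Proof.
move=> us H.
rewrite countE (eq_bigr (fun i => \sum_(w <- t) f i w)); last by move=> i _; rewrite countE.
rewrite exchange_big /= big_seq [RHS]big_seq; apply: eq_bigr => w wt.
rewrite -countE has_count.
have := count_le1 (f := f^~ w) us (fun i j => H w i j wt).
by case: (count _ _) => [|[]].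
Qed.

Lemma count_split_and (A : Type) (a b : pred A) s :
  count a s = count (fun x => a x && b x) s + count (fun x => a x && ~~ b x) s.
Proof. elim: s => //= x s ->; case: (a x); case: (b x) => /=; lia. Qed.

Section Words.
Variable T : finType.
Implicit Types u v w x y z : seq T.

Fixpoint W n : seq (seq T) :=
  if n is m.+1 then [seq a :: w | a <- enum T, w <- W m] else [:: [::]].

Lemma mem_W n w : (w \in W n) = (size w == n).
Proof.
elim: n w => [|n IH] [|a w] //=.
- by apply/negbTE/allpairsP => [[[b u] [_ _]]].
- rewrite eqSS -IH; apply/allpairsP/idP => [[[b u] [_ /= hu [_ ->]]]//|hw].
  by exists (a, w); rewrite mem_enum.
Qed.

Lemma size_W n : size (W n) = #|T| ^ n.
Proof. by elim: n => //= n IH; rewrite size_allpairs IH -cardT expnS. Qed.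

Lemma uniq_W n : uniq (W n).
Proof.
elim: n => //= n IH; apply: allpairs_uniq => //; first exact: enum_uniq.
by move=> [a u] [b v] _ _ /= [-> ->].
Qed.

Lemma count_split l m (R : seq T -> seq T -> bool) :
  count (fun w => R (take l w) (drop l w)) (W (l + m)) =
  \sum_(x <- W l) count (R x) (W m).
Proof.
elim: l R => [|l IH] R.
  by rewrite add0n /= big_seq1; apply: eq_count => w; rewrite take0 drop0.
rewrite addSn /= countE !big_allpairs_dep /=; apply: eq_bigr => a _.
by rewrite -countE (IH (fun x y => R (a :: x) y)).
Qed.

Lemma count_pred1_W n x : size x = n -> count (pred1 x) (W n) = 1.
Proof. by move=> hx; rewrite count_uniq_mem ?uniq_W // mem_W hx eqxx. Qed.

Lemma sum_count_mul (A : Type) (a : pred A) s (c : nat) :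
  \sum_(x <- s) (a x * c) = count a s * c.
Proof. by rewrite countE big_distrl. Qed.

Lemma card_W m (P : pred (seq T)) : #|[set t : m.-tuple T | P t]| = count P (W m).
Proof.
rewrite (@eq_card _ _ [pred t : m.-tuple T | P t]); last by move=> t; rewrite !inE.
rewrite cardE /enum_mem size_filter -enumT /=.
rewrite -(count_map val P).
apply/permP/uniq_perm; first by rewrite map_inj_uniq ?enum_uniq //; apply: val_inj.
  exact: uniq_W.
move=> w; rewrite mem_W; apply/mapP/idP => [[t _ ->]|hw].
  by rewrite size_tuple.
by exists (Tuple hw); rewrite ?mem_enum.
Qed.

End Words.

Section Counts.
Variables (k : nat) (x0 : 'I_k).

Lemma even_palE (w : seq 'I_k) : even_pal w <-> epal w.
Proof. by rewrite epalE. Qed.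

Lemma palstar_nil : palstar ([::] : seq 'I_k).
Proof. by exists [::]. Qed.

Lemma palstar_step (w : seq 'I_k) : w != [::] ->
  palstar w <-> exists l, [/\ 0 < l, l <= size w, Qm (take l w) & palstar (drop l w)].
Proof.
move=> wn; split; last first.
  case=> l [l0 lw Qu [ws [Hws Hd]]]; exists (take l w :: ws); split.
    move=> u; rewrite inE => /orP[/eqP ->|]; last exact: Hws.
    by apply/even_palE; case/andP: Qu.
  by rewrite /= -Hd cat_take_drop.
case=> [[|v ws] [Hws Hw]]; first by move: wn; rewrite Hw.
have Hv : epal v by apply/even_palE/Hws; rewrite mem_head.
have Hr : palstar (flatten ws).
  by exists ws; split=> // u hu; apply: Hws; rewrite inE hu orbT.
rewrite Hw /=.
have [sv _] := epal_size Hv.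
case Qv: (Qm v).
  exists (size v); rewrite size_cat take_size_cat // drop_size_cat //; split; [done|idtac|by rewrite Qv|done].
  lia.
have [l [l0 l2 Qu Hy Hd]] := nonQ_split x0 Hv (negbT Qv).
have lv' : l < size v by apply: leq_trans l2; lia.
have lv : l <= size v by apply: ltnW.
set sv' := size v in l2 Hy Hd lv lv' *.
exists l; rewrite size_cat takel_cat //.
split => //; first lia.
rewrite drop_cat lv'.
set y := take (sv' - l.*2) (drop l v) in Hy.
have Edr : drop l v = y ++ take l v.
  have E1 : drop (sv' - l.*2) (drop l v) = take l v.
    by rewrite drop_drop -Hd; congr drop; lia.
  by rewrite -E1 /y cat_take_drop.
rewrite Edr -catA.
case: Hr => ws' [Hws' Hr].
have Hu : even_pal (take l v) by apply/even_palE; case/andP: Qu.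
case yn: (y == [::]).
  rewrite (eqP yn) /=; exists (take l v :: ws'); split; last by rewrite /= Hr.
  by move=> u; rewrite inE => /orP[/eqP ->|]; last exact: Hws'.
exists (y :: take l v :: ws'); split; last by rewrite /= Hr.
move=> u; rewrite !inE => /orP[/eqP ->|/orP[/eqP ->|]] //; last exact: Hws'.
by apply/even_palE; rewrite /epal yn.
Qed.

End Counts.

Section Counts2.
Variables (k : nat) (x0 : 'I_k).

Definition palb (w : seq 'I_k) := `[< palstar w >].
Definition aa n := count palb (W 'I_k n.*2).
Definition pp j := count (@Qm _) (W 'I_k j.*2).
Definition SS j := \sum_(i < j | (i.+1).*2 <= j) k ^ (j - i.+1).

Lemma sub_in_count (A : eqType) (a b : pred A) (s : seq A) :
  {in s, subpred a b} -> count a s <= count b s.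
Proof.
move=> H; rewrite -(@eq_in_count _ (fun x => a x && b x)).
  by apply: sub_count => x /andP[].
by move=> x xs; case ax: (a x) => //=; rewrite (H x xs ax).
Qed.

Lemma count_andl (A : Type) (b : bool) (a : pred A) s :
  count (fun x => b && a x) s = b * count a s.
Proof. by case: b => /=; rewrite ?mul1n ?count_pred0. Qed.

Lemma aa0 : aa 0 = 1.
Proof. by rewrite /aa /= /palb asboolT //; exact: palstar_nil. Qed.

Lemma aa_rec n : 0 < n -> aa n = \sum_(1 <= j < n.+1) pp j * aa (n - j).
Proof.
move=> n0.
have E : count palb (W 'I_k n.*2) = count (fun w => has (fun j =>
    Qm (take j.*2 w) && palb (drop j.*2 w)) (iota 1 n)) (W 'I_k n.*2).
  apply: eq_in_count => w; rewrite mem_W => /eqP sw.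
  have wn : w != [::] by rewrite -size_eq0 sw; lia.
  apply/asboolP/hasP => [/(palstar_step x0 wn) [l [l0 lw Qu Hr]]|[j]].
    have [_ od] := epal_size (proj1 (QmE Qu)).
    rewrite size_takel // in od.
    exists l./2.
      rewrite mem_iota; apply/andP; split; first lia.
      by move: lw; rewrite sw; lia.
    have -> : l./2.*2 = l by lia.
    by rewrite Qu; apply/asboolP.
  rewrite mem_iota => /andP[j1 jn] /andP[Qu /asboolP Hr].
  apply/(palstar_step x0 wn); exists j.*2; split => //; first lia.
  by rewrite sw; lia.
rewrite /aa E count_has_eq; last first.
- move=> w i j; rewrite mem_W => /eqP sw; rewrite !mem_iota => hi hj.
  move=> /andP[Qi _] /andP[Qj _].
  have : i.*2 = j.*2 by apply: (Q_uniq (w := w)) => //; rewrite sw; lia.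
  lia.
- exact: iota_uniq.
have -> : index_iota 1 n.+1 = iota 1 n by rewrite /index_iota; congr iota; lia.
rewrite [LHS]big_seq [RHS]big_seq; apply: eq_bigr => j; rewrite mem_iota => hj.
have -> : n.*2 = j.*2 + (n - j).*2 by lia.
rewrite (count_split _ _ (fun x y => Qm x && palb y)).
rewrite (eq_bigr (fun x => (Qm x * aa (n - j))%N)); last by move=> x _; rewrite count_andl.
by rewrite sum_count_mul.
Qed.

Lemma pp0 : pp 0 = 0.
Proof. by []. Qed.

Lemma count_epal0 n : count (@epal0 _) (W 'I_k n.*2) = k ^ n.
Proof.
rewrite -addnn.
rewrite (@eq_in_count _ _ (fun w => (fun x y => y == rev x) (take n w) (drop n w))); last first.
  by move=> w; rewrite mem_W => /eqP sw; rewrite /= (epal0_half (n := n)) // sw addnn.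
rewrite (count_split _ _ (fun x y => y == rev x)).
rewrite big_seq (eq_bigr (fun _ => 1%N)); last first.
  by move=> x; rewrite mem_W => /eqP sx; apply: count_pred1_W; rewrite size_rev.
by rewrite -big_seq sum1_size size_W card_ord.
Qed.

Lemma pp_le j : pp j <= k ^ j.
Proof.
rewrite -count_epal0; apply: sub_count => w /QmE [/andP[_ ->] _] //.
Qed.

Lemma pp1 : pp 1 = k.
Proof.
rewrite -[k]expn1 -count_epal0; apply: eq_in_count => w.
rewrite mem_W => /eqP sw.
case: w sw => [|a [|b [|]]] //= _.
by rewrite /Qm /epal /= andbT.
Qed.

Definition nq j := count (fun v => epal v && ~~ Qm v) (W 'I_k j.*2).

Lemma pp_nq j : 0 < j -> k ^ j = pp j + nq j.
Proof.
move=> j0; rewrite -count_epal0 (count_split_and _ (@Qm _)).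
congr (_ + _); apply: eq_in_count => w; rewrite mem_W => /eqP sw.
  by case Qw: (Qm w); rewrite ?andbF // andbT; case/QmE: Qw => /andP[].
have wn : w != [::] by rewrite -size_eq0 sw; lia.
by rewrite /epal wn.
Qed.

Lemma countG i j : 0 < i -> i.*2 <= j ->
  count (fun v => Qm (take i.*2 v) && Rp (take i.*2 v) (drop i.*2 v)) (W 'I_k j.*2)
  = pp i * k ^ (j - i.*2).
Proof.
move=> i0 ij.
have -> : j.*2 = i.*2 + (j.*2 - i.*2) by lia.
rewrite (count_split _ _ (fun x y => Qm x && Rp x y)).
rewrite big_seq (eq_bigr (fun x => (Qm x * k ^ (j - i.*2))%N)); last first.
  move=> x; rewrite mem_W => /eqP sx; rewrite count_andl; congr (_ * _).
  have -> : j.*2 - i.*2 = (j - i.*2).*2 + i.*2 by lia.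
  rewrite (@eq_in_count _ _ (fun y => (fun a b => epal0 a && (b == x))
      (take (j - i.*2).*2 y) (drop (j - i.*2).*2 y))); last first.
    move=> y; rewrite mem_W => /eqP sy /=; rewrite /Rp sx sy.
    by have -> : (j - i.*2).*2 + i.*2 - i.*2 = (j - i.*2).*2 by lia.
  rewrite (count_split _ _ (fun a b => epal0 a && (b == x))) -count_epal0 big_seq.
  rewrite (eq_bigr (fun a => (epal0 a * 1)%N)); last first.
    move=> a _; rewrite count_andl; congr (_ * _).
    by apply: count_pred1_W.
  by rewrite -big_seq sum_count_mul muln1.
by rewrite -big_seq sum_count_mul.
Qed.

Lemma nq_lower j : 2 <= j -> k ^ (j - 2) * k <= nq j.
Proof.
move=> j2; have E := countG (i := 1) (j := j) (ltn0Sn 0) j2.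
rewrite pp1 mulnC in E; rewrite -E.
apply: sub_in_count => v; rewrite mem_W => /eqP sv /andP[Qu Hr].
by apply: (split_nonQ (l := 2)) => //; rewrite sv; lia.
Qed.

Lemma nq_upper j : nq j <= SS j.
Proof.
pose f (i : nat) (v : seq 'I_k) : bool := ((i.+1).*2 <= j) && (Qm (take (i.+1).*2 v) && Rp (take (i.+1).*2 v) (drop (i.+1).*2 v)).
apply: (@leq_trans (count (fun v => has (f^~ v) (iota 0 j)) (W 'I_k j.*2))).
  apply: sub_in_count => v; rewrite mem_W => /eqP sv /andP[Hv nQ].
  have [l [l0 l2 Qu Hy Hd]] := nonQ_split x0 Hv nQ.
  set s := size v in sv l2 Hy Hd.
  have ls : l <= s by lia.
  have [_ od] := epal_size (proj1 (QmE Qu)).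
  rewrite size_takel in od; last exact: ls.
  apply/hasP; exists (l./2).-1.
    rewrite mem_iota; apply/andP; split=> //; lia.
  rewrite /f; have -> : ((l./2).-1.+1).*2 = l by lia.
  apply/andP; split; first lia.
  rewrite Qu /= /Rp size_takel ?size_drop; last exact: ls.
  rewrite -/s.
  have -> : s - l - l = s - l.*2 by lia.
  rewrite Hy /= drop_drop.
  have -> : s - l.*2 + l = s - l by lia.
  by rewrite Hd.
apply: (leq_trans (count_has_le _ _ _)).
have -> : iota 0 j = index_iota 0 j by rewrite /index_iota subn0.
rewrite big_mkord /SS [X in _ <= X]big_mkcond /=.
apply: leq_sum => i _; rewrite /f.
case: ifP => h.
  rewrite (eq_count (a2 := fun v => Qm (take (i.+1).*2 v) && Rp (take (i.+1).*2 v) (drop (i.+1).*2 v))) //.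
  rewrite countG //.
  apply: (leq_trans (leq_mul (pp_le _) (leqnn _))).
  by rewrite -expnD; have -> : i.+1 + (j - (i.+1).*2) = j - i.+1 by lia.
by rewrite count_pred0.
Qed.

Lemma F5 j : k ^ j <= pp j + SS j + (j == 0).
Proof.
case: j => [|j]; first by rewrite pp0 /SS big_ord0.
by rewrite (pp_nq (ltn0Sn _)) addn0 leq_add2l nq_upper.
Qed.

Lemma F4 j : 2 <= j -> pp j + k ^ j.-1 <= k ^ j.
Proof.
move=> j2; rewrite (pp_nq (ltnW j2)) leq_add2l.
apply: leq_trans (nq_lower j2).
by rewrite -expnSr; have -> : (j - 2).+1 = j.-1 by lia.
Qed.

Lemma SS_rec j : SS j.+2 = k ^ j.+1 + k * SS j.
Proof.
rewrite /SS !big_mkcond /= big_ord_recl big_ord_recr /=.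
rewrite [in RHS]big_mkcond big_distrr /= /bump !leq0n !add1n.
have -> : (j.+2.*2 <= j.+2) = false by lia.
rewrite addn0 subn1 /=; congr (_ + _); apply: eq_bigr => i _.
have -> : ((i.+2).*2 <= j.+2) = ((i.+1).*2 <= j) by lia.
case: ifP => h; last by rewrite muln0.
by rewrite -expnS; congr (_ ^ _); lia.
Qed.

Lemma aa_ge1 n : 0 < k -> 1 <= aa n.
Proof.
move=> k0; elim: n => [|n IH]; first by rewrite aa0.
rewrite aa_rec // big_nat_recl // pp1 subn1 /=.
apply: leq_trans (leq_addr _ _); by rewrite muln_gt0 k0.
Qed.

End Counts2.

Import Order.TTheory GRing.Theory Num.Theory.
Local Open Scope classical_set_scope.
Local Open Scope ring_scope.

Section Real1.
Variable R : realType.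
Implicit Types x y q : R.

Lemma lerX x y n : 0 <= x -> x <= y -> x ^+ n <= y ^+ n.
Proof.
move=> hx hxy; apply: lerXn2r => //; rewrite nnegrE //; exact: le_trans hxy.
Qed.

Lemma geo_eq q a b : (a <= b)%N ->
  (1 - q) * \sum_(a <= j < b) q ^+ j = q ^+ a - q ^+ b.
Proof.
move=> ab; elim: b ab => [|b IH] ab.
  by move: ab; rewrite leqn0 => /eqP ->; rewrite big_geq // mulr0 subrr.
case: (ltngtP a b.+1) => h; last by rewrite h big_geq // mulr0 subrr.
  have ab' : (a <= b)%N by [].
  rewrite big_nat_recr //= mulrDr IH //.
  rewrite exprS; ring.
by move: (leq_ltn_trans ab h); rewrite ltnn.
Qed.

Lemma geo_tail q a b : 0 <= q < 1 -> \sum_(a <= j < b) q ^+ j <= q ^+ a / (1 - q).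
Proof.
move=> /andP[q0 q1].
have d0 : 0 < 1 - q by rewrite subr_gt0.
have qa : 0 <= q ^+ a by apply: exprn_ge0.
case: (leqP a b) => ab; last first.
  rewrite big_geq; last exact: ltnW.
  by apply: divr_ge0 => //; apply: ltW.
rewrite ler_pdivlMr //.
rewrite mulrC geo_eq //.
have : 0 <= q ^+ b by apply: exprn_ge0.
lra.
Qed.

Lemma bernoulli q n : 0 <= q <= 1 -> q ^+ n * (1 + n%:R * (1 - q)) <= 1.
Proof.
move=> /andP[q0 q1]; elim: n => [|n IH]; first by rewrite expr0 mul0r addr0 mulr1.
have y0 : 0 <= q ^+ n by apply: exprn_ge0.
have y1 : q ^+ n <= 1 by apply: exprn_ile1.
rewrite exprS -natr1.
set y := q ^+ n in IH y0 y1 *; set m : R := n%:R in IH *.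
have h1 : q * (y * (1 + m * (1 - q))) <= q * 1 := ler_wpM2l q0 IH.
have qy : q * y <= 1 by apply: mulr_ile1.
have h2 : q * y * (1 - q) <= 1 * (1 - q) by apply: ler_wpM2r; rewrite ?subr_ge0.
have -> : q * y * (1 + (m + 1) * (1 - q)) = q * (y * (1 + m * (1 - q))) + q * y * (1 - q) by ring.
lra.
Qed.

Lemma small_pow q e : 0 <= q < 1 -> 0 < e -> exists N, q ^+ N < e.
Proof.
move=> /andP[q0 q1] e0.
set d := 1 - q.
have d0 : 0 < d by rewrite /d subr_gt0.
have ed0 : 0 < e * d by rewrite mulr_gt0.
have hz : 0 <= (e * d)^-1 by rewrite invr_ge0 ltW.
have := archi_boundP hz.
set n := Num.Def.archi_bound _ => hn.
exists n; rewrite ltNge; apply/negP => he.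
have hb : q ^+ n * (1 + n%:R * d) <= 1 by apply: bernoulli; rewrite q0 ltW.
have E1 : (e * d) * (e * d)^-1 = 1 by rewrite mulfV // gt_eqF.
have m0 : 0 <= 1 + n%:R * d :> R by rewrite addr_ge0 // mulr_ge0 // ltW.
have h1 : e * (1 + n%:R * d) <= q ^+ n * (1 + n%:R * d) by apply: ler_wpM2r.
have h2 : (e * d) * (e * d)^-1 < (e * d) * n%:R by rewrite ltr_pM2l.
lra.
Qed.

End Real1.

Section Main.
Variables (R : realType) (k : nat) (p a S : nat -> nat).
Hypotheses (hk : (2 <= k)%N) (p0 : p 0%N = 0%N) (p1 : p 1%N = k)
  (ple : forall j, (p j <= k ^ j)%N)
  (F4 : forall j, (2 <= j)%N -> (p j + k ^ j.-1 <= k ^ j)%N)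
  (F5 : forall j, (k ^ j <= p j + S j + (j == 0%N))%N)
  (S0 : S 0%N = 0%N) (S1 : S 1%N = 0%N)
  (Srec : forall j, S j.+2 = (k ^ j.+1 + k * S j)%N)
  (a0 : a 0%N = 1%N)
  (arec : forall n, (0 < n)%N -> a n = (\sum_(1 <= j < n.+1) p j * a (n - j))%N)
  (age1 : forall n, (1 <= a n)%N).

Definition K : R := k%:R.
Definition f (M : nat) (x : R) := \sum_(0 <= j < M.+1) (p j)%:R * x ^+ j.
Definition L (M : nat) : R := \sum_(0 <= j < M.+1) (p j)%:R * j%:R.
Definition x1 : R := (2 * K - 1)^-1.
Definition x0 : R := (2 * K - 2^-1)^-1.
Definition q : R := K * x1.

Lemma K2 : 2 <= K.
Proof. by rewrite /K (ler_nat R 2 k). Qed.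

Lemma x1E : x1 * (2 * K - 1) = 1.
Proof. have := K2 => h; rewrite /x1 mulVf //; apply/eqP => E; lra. Qed.

Lemma x1_gt0 : 0 < x1.
Proof. have := K2 => h; rewrite /x1 invr_gt0; lra. Qed.

Lemma x1_le1 : x1 <= 1.
Proof. have := K2; have := x1E; have := x1_gt0; nra. Qed.

Lemma q_ge0 : 0 <= q.
Proof. have := K2; have := x1_gt0; rewrite /q; nra. Qed.

Lemma q_lt1 : q < 1.
Proof. have := K2; have := x1E; have := x1_gt0; rewrite /q; nra. Qed.

Lemma f_ge0 M x : 0 <= x -> 0 <= f M x.
Proof. by move=> hx; apply: sumr_ge0 => j _; rewrite mulr_ge0 // exprn_ge0. Qed.

Lemma f_split M N x : (M <= N)%N ->
  f N x = f M x + \sum_(M.+1 <= j < N.+1) (p j)%:R * x ^+ j.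
Proof. by move=> MN; rewrite /f (big_cat_nat _ (n := M.+1)). Qed.

Lemma f_mono M N x : 0 <= x -> (M <= N)%N -> f M x <= f N x.
Proof.
move=> hx MN; rewrite (f_split _ MN) lerDl.
by apply: sumr_ge0 => j _; rewrite mulr_ge0 // exprn_ge0.
Qed.

Lemma pK j : (p j)%:R <= K ^+ j.
Proof. by rewrite /K -natrX ler_nat. Qed.

Lemma f_tail M N y : 0 <= y <= x1 -> (M <= N)%N ->
  f N y <= f M y + q ^+ M.+1 / (1 - q).
Proof.
move=> /andP[y0 y1] MN; rewrite (f_split _ MN) lerD2l.
apply: le_trans (geo_tail _ _ _); last by rewrite q_ge0 q_lt1.
apply: ler_sum => j _; rewrite /q exprMn.
apply: ler_pM => //; first by rewrite exprn_ge0.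
  exact: pK.
exact: lerX.
Qed.

Lemma pow_lip (x y : R) n : 0 <= x -> x <= y -> y <= 1 -> y ^+ n - x ^+ n <= n%:R * (y - x).
Proof.
move=> x0' xy y1; elim: n => [|n IH]; first by rewrite !expr0 subrr mul0r.
have h1 : x ^+ n <= y ^+ n by apply: lerX.
have h2 : x ^+ n <= 1 by apply: exprn_ile1 => //; exact: le_trans y1.
have h3 : 0 <= x ^+ n by apply: exprn_ge0.
have h4 : y * (y ^+ n - x ^+ n) <= 1 * (y ^+ n - x ^+ n) by apply: ler_wpM2r; rewrite ?subr_ge0.
have h5 : (y - x) * x ^+ n <= (y - x) * 1 by apply: ler_wpM2l; rewrite ?subr_ge0.
rewrite !exprS -natr1.
have -> : y * y ^+ n - x * x ^+ n = y * (y ^+ n - x ^+ n) + (y - x) * x ^+ n by ring.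
lra.
Qed.

Lemma f_lip M x y : 0 <= x -> x <= y -> y <= 1 -> f M y - f M x <= (y - x) * L M.
Proof.
move=> hx xy y1; rewrite /f /L -sumrB mulr_sumr; apply: ler_sum => j _.
rewrite -mulrBr mulrCA; apply: ler_wpM2l; first by rewrite ler0n.
by rewrite mulrC; apply: pow_lip.
Qed.

Lemma L_ge0 M : 0 <= L M.
Proof. by apply: sumr_ge0 => j _; rewrite mulr_ge0 ?ler0n. Qed.

Lemma pK2 j : (p j.+2)%:R <= (K - 1) * K ^+ j.+1.
Proof.
have := F4 (isT : (2 <= j.+2)%N); rewrite -(ler_nat R) natrD !natrX -/K /=.
by move=> h; rewrite mulrBl mul1r -exprS; lra.
Qed.

Lemma x0E : x0 * (2 * K - 2^-1) = 1.
Proof. have := K2 => h; rewrite /x0 mulVf //; apply/eqP => E; lra. Qed.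

Lemma x0_gt0 : 0 < x0.
Proof. have := K2 => h; rewrite /x0 invr_gt0; lra. Qed.

Lemma Kx0_lt1 : K * x0 < 1.
Proof. have := K2; have := x0E; have := x0_gt0; nra. Qed.

Lemma f_x0 M : f M x0 <= K * x0 + (K - 1) * K * x0 ^+ 2 / (1 - K * x0).
Proof.
have hx := x0_gt0; have hK := K2; have hq := Kx0_lt1.
apply: le_trans (@f_mono M M.+2 x0 (ltW hx) (leq_trans (leqnSn M) (leqnSn M.+1))) _.
rewrite /f big_nat_recl // big_nat_recl // p0 p1 mul0r add0r expr1 -/K.
rewrite lerD2l.
apply: (@le_trans _ _ (\sum_(0 <= j < M.+1) (K - 1) * K * x0 ^+ 2 * (K * x0) ^+ j)).
  apply: ler_sum => j _.
  have -> : (K - 1) * K * x0 ^+ 2 * (K * x0) ^+ j = ((K - 1) * K ^+ j.+1) * x0 ^+ j.+2.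
    by rewrite exprMn !exprS; ring.
  by apply: ler_wpM2r; [rewrite exprn_ge0 // ltW | exact: pK2].
have c0 : 0 <= (K - 1) * K * x0 ^+ 2.
  by apply: mulr_ge0; [apply: mulr_ge0; lra | apply: exprn_ge0; lra].
rewrite -mulr_sumr; apply: ler_wpM2l => //.
have := @geo_tail _ (K * x0) 0 M.+1; rewrite expr0 mul1r; apply.
by apply/andP; split; [apply: mulr_ge0; lra | exact: hq].
Qed.

Lemma B_lt1 : K * x0 + (K - 1) * K * x0 ^+ 2 / (1 - K * x0) < 1.
Proof.
have hx := x0_gt0; have hK := K2; have hq := Kx0_lt1; have E := x0E.
have d0 : 0 < 1 - K * x0 by rewrite subr_gt0.
rewrite -ltrBrDl ltr_pdivrMr //.
have h2 : 1 < 2 * K * x0 by nra.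
nra.
Qed.

Definition Sb : R := K * x1 ^+ 2 / ((1 - K * x1) * (1 - K * x1 ^+ 2)).
Definition C N : R := \sum_(0 <= j < N.+1) (S j)%:R * x1 ^+ j.

Lemma Kx12 : K * x1 ^+ 2 < 1.
Proof.
have h1 := q_lt1; have h0 := q_ge0; have h2 := x1_gt0; have h3 := x1_le1.
rewrite /q in h0 h1.
have h : (K * x1) * x1 <= (K * x1) * 1 by apply: ler_wpM2l; lra.
have -> : K * x1 ^+ 2 = (K * x1) * x1 by rewrite expr2 mulrA.
lra.
Qed.

Lemma Sb_ge0 : 0 <= Sb.
Proof.
have := q_lt1; have := x1_gt0; have := K2; have := Kx12; rewrite /Sb /q => h1 h2 h3 h4.
apply: divr_ge0; first by apply: mulr_ge0; [lra | apply: exprn_ge0; lra].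
by apply: mulr_ge0; lra.
Qed.

Lemma Sb_fix : K * x1 ^+ 2 / (1 - K * x1) + K * x1 ^+ 2 * Sb = Sb.
Proof.
have := q_lt1; have := Kx12; rewrite /Sb /q => h1 h2.
have n1 : 1 - K * x1 != 0 by apply/eqP; lra.
have n2 : 1 - K * x1 ^+ 2 != 0 by apply/eqP; lra.
by field; rewrite n1 n2.
Qed.

Lemma C_bound N : C N <= Sb /\ C N.+1 <= Sb.
Proof.
have hS := Sb_ge0; have hx := x1_gt0; have hq0 := q_ge0; have hq1 := q_lt1.
elim: N => [|N [IH1 IH2]].
  rewrite /C; split.
    by rewrite big_nat_recl // big_geq // S0 mul0r add0r.
  by rewrite big_nat_recl // big_nat_recl // big_geq // S0 S1 !mul0r !addr0.
split => //.
rewrite /C big_nat_recl // big_nat_recl // S0 S1 !mul0r !add0r.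
rewrite (eq_bigr (fun j => K * x1 ^+ 2 * q ^+ j + K * x1 ^+ 2 * ((S j)%:R * x1 ^+ j))); last first.
  move=> j _; rewrite Srec natrD natrM natrX -/K /q exprMn !exprS; ring.
rewrite big_split /= -!mulr_sumr -/(C N).
have c0 : 0 <= K * x1 ^+ 2 by apply: mulr_ge0; [have := K2; lra | apply: exprn_ge0; lra].
have g : \sum_(0 <= i < N.+1) q ^+ i <= (1 - K * x1)^-1.
  by have := @geo_tail _ q 0 N.+1; rewrite expr0 mul1r /q; apply; rewrite hq0 hq1.
rewrite -[X in _ <= X]Sb_fix lerD //; last exact: ler_wpM2l.
exact: ler_wpM2l.
Qed.

Lemma f_x1_lower N : (1 - q ^+ N.+1) / (1 - q) - 1 - Sb <= f N x1.
Proof.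
have hx := x1_gt0; have hq0 := q_ge0; have hq1 := q_lt1.
have E := @geo_eq _ q 0 N.+1 isT; rewrite expr0 in E.
have d0 : 1 - q != 0 by apply/eqP; lra.
have -> : (1 - q ^+ N.+1) / (1 - q) = \sum_(0 <= j < N.+1) q ^+ j.
  by rewrite -E (mulrC (1 - q)) mulfK.
have [hC _] := C_bound N.
have B1 : \sum_(0 <= j < N.+1) (j == 0%N)%:R * x1 ^+ j = 1 :> R.
  rewrite big_nat_recl // big1 ?addr0 ?mul1r ?expr0 // => j _.
  by rewrite mul0r.
have : \sum_(0 <= j < N.+1) q ^+ j - C N - 1 <= f N x1.
  rewrite -B1 /C -!sumrB /f; apply: ler_sum => j _.
  have h := F5 j; rewrite -(ler_nat R) !natrD natrX -/K in h.
  have -> : q ^+ j - (S j)%:R * x1 ^+ j - (j == 0%N)%:R * x1 ^+ j =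
            (K ^+ j - (S j)%:R - (j == 0%N)%:R) * x1 ^+ j by rewrite /q exprMn; ring.
  by apply: ler_wpM2r; [apply: exprn_ge0; lra | lra].
lra.
Qed.

Lemma eps_pos : 0 < 1 - (2 + Sb) * (1 - q).
Proof.
have hK := K2.
have n1 : K - 1 != 0 by apply/eqP; lra.
have n2 : 2 * K - 1 != 0 by apply/eqP; lra.
have n3 : 4 * K - 1 != 0 by apply/eqP; lra.
have -> : 1 - (2 + Sb) * (1 - q) =
   (2 * K ^+ 2 - 4 * K + 1) / ((2 * K - 1) * (K - 1) * (4 * K - 1)).
  rewrite /Sb /q /x1; field.
  rewrite -/K n1 n2 n3 /=; apply/eqP; nra.
apply: divr_gt0; first nra.
apply: mulr_gt0; [apply: mulr_gt0|]; lra.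
Qed.

Lemma exists_N1 : exists N, 1 < f N x1.
Proof.
have hq0 := q_ge0; have hq1 := q_lt1; have he := eps_pos; have hS := Sb_ge0.
have [N hN] := @small_pow _ q _ (introT andP (conj hq0 hq1)) he.
exists N.
have y0 : 0 <= q ^+ N by apply: exprn_ge0.
have hQ : q ^+ N.+1 <= q ^+ N by rewrite exprS; nra.
have hf := f_x1_lower N.
set G := (1 - q ^+ N.+1) / (1 - q) in hf.
have d0 : 1 - q != 0 by apply/eqP; lra.
have hG : G * (1 - q) = 1 - q ^+ N.+1 by rewrite /G mulfVK.
have : (2 + Sb) * (1 - q) < G * (1 - q) by rewrite hG; lra.
rewrite ltr_pM2r ?subr_gt0 // => h.
lra.
Qed.

Lemma x0_lt_x1 : x0 < x1.
Proof.
have hK := K2; have E0 := x0E; have E1 := x1E; have hx := x0_gt0.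
have h2K : 0 < 2 * K - 1 by lra.
have E : (x1 - x0) * (2 * K - 1) = x0 / 2 by lra.
rewrite -subr_gt0 -(pmulr_lgt0 _ h2K) E; lra.
Qed.

Definition Aset : set R := [set x | 0 <= x /\ x <= x1 /\ forall M, f M x <= 1].
Definition r : R := sup Aset.

Lemma A_x0 : Aset x0.
Proof.
split; first exact: ltW x0_gt0.
split; first exact: ltW x0_lt_x1.
move=> M; apply: le_trans (f_x0 M) _; exact: ltW B_lt1.
Qed.

Lemma A_has_sup : has_sup Aset.
Proof.
split; first by exists x0; exact: A_x0.
by exists x1 => y [_ []].
Qed.

Lemma r_ge_x0 : x0 <= r.
Proof. exact: (sup_upper_bound A_has_sup A_x0). Qed.

Lemma r_le_x1 : r <= x1.
Proof. by apply: ge_sup; [exists x0; exact: A_x0 | move=> y [_ []]]. Qed.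

Lemma r_ge0 : 0 <= r.
Proof. exact: le_trans (ltW x0_gt0) r_ge_x0. Qed.

Lemma r_le1 : r <= 1.
Proof. exact: le_trans r_le_x1 x1_le1. Qed.

Lemma f_r_le1 M : f M r <= 1.
Proof.
rewrite leNgt; apply/negP => h.
set d := f M r - 1.
have d0 : 0 < d by rewrite /d subr_gt0.
set Lm := L M + 1.
have L0 : 0 < Lm by have := L_ge0 M; rewrite /Lm; lra.
have e0 : 0 < d / Lm by rewrite divr_gt0.
have [e [e0' [ex1 Ae]] he] := sup_adherent e0 A_has_sup.
rewrite -/r in he.
have er : e <= r by apply: (sup_upper_bound A_has_sup).
have h1 := f_lip M e0' er r_le1.
have h2 : (r - e) * L M <= (r - e) * Lm by apply: ler_wpM2l; rewrite ?subr_ge0 // /Lm; lra.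
have h3 : (r - e) * Lm < (d / Lm) * Lm by rewrite ltr_pM2r //; lra.
have Ln : Lm != 0 by apply/eqP; lra.
have h4 : d / Lm * Lm = d by rewrite mulfVK.
have := Ae M; rewrite /d in h4 h3; lra.
Qed.

Lemma r_lt_x1 : r < x1.
Proof.
have [N hN] := exists_N1.
rewrite lt_neqAle r_le_x1 andbT; apply/eqP => E.
by have := f_r_le1 N; rewrite E; lra.
Qed.

Lemma f_r_ge M : 1 - q ^+ M.+1 / (1 - q) <= f M r.
Proof.
rewrite leNgt; apply/negP => h.
set t := q ^+ M.+1 / (1 - q) in h.
set d := 1 - t - f M r.
have d0 : 0 < d by rewrite /d; lra.
set Lm := L M + 1.
have L0 : 0 < Lm by have := L_ge0 M; rewrite /Lm; lra.
have e0 : 0 < d / Lm by rewrite divr_gt0.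
set y := Num.min x1 (r + d / Lm).
have ry : r < y by rewrite /y lt_min r_lt_x1 /=; lra.
have yx1 : y <= x1 by rewrite /y ge_min lexx.
have yr : y <= r + d / Lm by rewrite /y ge_min lexx orbT.
have y0 : 0 <= y by have := r_ge0; lra.
have nA : ~ Aset y.
  by move=> Ay; have := sup_upper_bound A_has_sup Ay; rewrite -/r; lra.
case: (pselect (exists N, 1 < f N y)) => [[N hN]|hno]; last first.
  apply: nA; split => //; split => // N; rewrite leNgt; apply/negP => hN.
  by apply: hno; exists N.
have ht := @f_tail M (maxn N M) y (introT andP (conj y0 yx1)) (leq_maxr N M).
have hm := @f_mono N (maxn N M) y y0 (leq_maxl N M).
have h1 := f_lip M r_ge0 (ltW ry) (le_trans yx1 x1_le1).
have h2 : (y - r) * L M <= (y - r) * Lm by apply: ler_wpM2l; rewrite ?subr_ge0 ?ltW // /Lm; lra.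
have h3 : (y - r) * Lm <= (d / Lm) * Lm by rewrite ler_pM2r //; lra.
have Ln : Lm != 0 by apply/eqP; lra.
have h4 : d / Lm * Lm = d by rewrite mulfVK.
rewrite /d in h4 h3; rewrite -/t in ht; lra.
Qed.

Lemma r_gt_x0 : x0 < r.
Proof.
have hq0 := q_ge0; have hq1 := q_lt1.
set B := K * x0 + (K - 1) * K * x0 ^+ 2 / (1 - K * x0).
have hB : B < 1 := B_lt1.
have e0 : 0 < (1 - B) * (1 - q) by rewrite mulr_gt0 // subr_gt0.
have [N hN] := @small_pow _ q _ (introT andP (conj hq0 hq1)) e0.
have y0 : 0 <= q ^+ N by apply: exprn_ge0.
have hQ : q ^+ N.+1 <= q ^+ N by rewrite exprS; nra.
have d0 : 1 - q != 0 by apply/eqP; lra.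
have ht : q ^+ N.+1 / (1 - q) < 1 - B.
  by rewrite ltr_pdivrMr ?subr_gt0 //; lra.
rewrite lt_neqAle r_ge_x0 andbT; apply/eqP => E.
have := f_r_ge N; rewrite -E; have := f_x0 N; rewrite -/B; lra.
Qed.

Lemma r_gt0 : 0 < r.
Proof. exact: lt_trans x0_gt0 r_gt_x0. Qed.

Definition b n : R := (a n)%:R * r ^+ n.
Definition cc j : R := (p j)%:R * r ^+ j.

Lemma cc_ge0 j : 0 <= cc j.
Proof. by rewrite /cc mulr_ge0 ?ler0n // exprn_ge0 // r_ge0. Qed.

Lemma f_r1 n : f n r = \sum_(1 <= j < n.+1) cc j.
Proof. by rewrite /f big_ltn // p0 mul0r add0r. Qed.

Lemma b_rec n : (0 < n)%N -> b n = \sum_(1 <= j < n.+1) cc j * b (n - j).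
Proof.
move=> n0; rewrite /b arec // natr_sum mulr_suml.
rewrite big_nat_cond [RHS]big_nat_cond; apply: eq_bigr => j /andP[/andP[j1 jn] _].
rewrite natrM /cc.
have -> : r ^+ n = r ^+ j * r ^+ (n - j) by rewrite -exprD subnKC // -ltnS.
ring.
Qed.

Lemma b_le1 n : b n <= 1.
Proof.
elim/ltn_ind: n => n IH.
case: n IH => [|n] IH; first by rewrite /b a0 expr0 mulr1.
rewrite b_rec //.
apply: le_trans (f_r_le1 n.+1); rewrite f_r1.
rewrite big_nat_cond [X in _ <= X]big_nat_cond; apply: ler_sum => j /andP[/andP[j1 jn] _].
rewrite -[X in _ <= X]mulr1; apply: ler_wpM2l; first exact: cc_ge0.
by apply: IH; rewrite ltn_subrL j1.
Qed.

Lemma b_ge n : r ^+ n <= b n.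
Proof.
rewrite /b -[X in X <= _]mul1r; apply: ler_wpM2r; first by rewrite exprn_ge0 // r_ge0.
by rewrite (ler_nat R 1).
Qed.

Lemma lower_bound : exists c, 0 < c /\ forall n, c <= b n.
Proof.
have hq0 := q_ge0; have hq1 := q_lt1.
have D0 : 0 < 1 - q by rewrite subr_gt0.
have e0 : 0 < (1 - q) ^+ 2 / 2 by rewrite divr_gt0 // exprn_gt0.
have [N hN] := @small_pow _ q _ (introT andP (conj hq0 hq1)) e0.
set M := N.+1.
have hM : q ^+ M <= q ^+ N by rewrite /M exprS; have := exprn_ge0 N hq0; nra.
pose eps m := q ^+ m.+1 / (1 - q).
have eps0 m : 0 <= eps m by rewrite /eps divr_ge0 ?exprn_ge0 // ltW.
pose E n := \sum_(M <= m < n.+1) eps m.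
have E0 n : 0 <= E n by apply: sumr_ge0 => m _; exact: eps0.
have Dn : 1 - q != 0 by apply/eqP; lra.
have E_le n : E n <= 2^-1.
  have -> : E n = q / (1 - q) * \sum_(M <= m < n.+1) q ^+ m.
    by rewrite mulr_sumr; apply: eq_bigr => m _; rewrite /eps exprS mulrAC.
  have hS := @geo_tail _ q M n.+1 (introT andP (conj hq0 hq1)).
  set Sg := \sum_(M <= m < n.+1) q ^+ m in hS *.
  have h2 : q ^+ M / (1 - q) <= ((1 - q) ^+ 2 / 2) / (1 - q).
    by apply: ler_wpM2r; [rewrite invr_ge0 ltW | lra].
  have h3 : ((1 - q) ^+ 2 / 2) / (1 - q) = (1 - q) / 2.
    by field.
  have hS' : Sg <= (1 - q) / 2 by lra.
  have Sg0 : 0 <= Sg by apply: sumr_ge0 => m _; exact: exprn_ge0.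
  have h4 : q / (1 - q) * Sg <= q / (1 - q) * ((1 - q) / 2).
    by apply: ler_wpM2l => //; rewrite divr_ge0 // ltW.
  have h5 : q / (1 - q) * ((1 - q) / 2) = q / 2 by field.
  lra.
have E_mono m1 m2 : (m1 <= m2)%N -> E m1 <= E m2.
  move=> m12; case: (leqP M m1.+1) => hm.
    have m12' : (m1.+1 <= m2.+1)%N by rewrite ltnS.
    rewrite /E (@big_cat_nat _ _ _ m1.+1 M m2.+1 xpredT (fun m => eps m) hm m12').
    by rewrite lerDl; apply: sumr_ge0 => m _; exact: eps0.
  have hm' : (m1.+1 <= M)%N by apply: ltnW.
  rewrite /E (@big_geq _ _ _ M m1.+1 xpredT (fun m => eps m) hm').
  exact: E0.
pose c0 := r ^+ M.
have c00 : 0 <= c0 by rewrite exprn_ge0 // r_ge0.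
have c0pos : 0 < c0 by rewrite exprn_gt0 // r_gt0.
have claim n : c0 * (1 - E n) <= b n.
  elim/ltn_ind: n => n IH.
  case: (ltnP n M) => hn.
    rewrite /E big_geq // subr0 mulr1.
    apply: le_trans (b_ge n).
    by apply: ler_wiXn2l; [exact: r_ge0 | exact: r_le1 | exact: ltnW].
  have n0 : (0 < n)%N by apply: leq_trans hn.
  pose X := c0 * (1 - E n.-1).
  have X0 : 0 <= X by apply: mulr_ge0 => //; have := E_le n.-1; lra.
  have h1 : f n r * (c0 * (1 - E n.-1)) <= b n.
    rewrite (b_rec n0) (f_r1 n) (mulr_suml _ _ _ X).
    rewrite big_nat_cond [X in _ <= X]big_nat_cond; apply: ler_sum => j /andP[/andP[j1 jn] _].
    apply: ler_wpM2l; first exact: cc_ge0.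
    apply: le_trans (IH (n - j)%N _); last by rewrite ltn_subrL j1.
    apply: ler_wpM2l => //; rewrite lerD2l lerN2; apply: E_mono.
    by rewrite -subn1 leq_sub2l.
  have h2 : (1 - eps n) * (c0 * (1 - E n.-1)) <= f n r * (c0 * (1 - E n.-1)) by apply: ler_wpM2r => //; exact: f_r_ge.
  have EnE : E n = E n.-1 + eps n.
    rewrite /E -(prednK n0) big_nat_recr //=.
    by rewrite (prednK n0).
  have h3 : 0 <= eps n * c0 * E n.-1.
    by apply: mulr_ge0; [apply: mulr_ge0 => //; exact: eps0 | exact: E0].
  rewrite EnE; lra.
exists (c0 / 2); split; first by rewrite divr_gt0.
move=> n; apply: le_trans (claim n).
have := E_le n; have := E0 n; nra.
Qed.

Lemma final_bound : exists alpha : R, (2 * K - 1 < alpha) /\ (alpha < 2 * K - 2^-1) /\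
  exists c1 c2 : R, 0 < c1 /\ 0 < c2 /\
    forall n, c1 * alpha ^+ n <= (a n)%:R /\ (a n)%:R <= 1 * alpha ^+ n.
Proof.
have hr := r_gt0; have hK := K2.
exists r^-1; split.
  rewrite -[2 * K - 1]invrK -/x1 ltf_pV2 ?posrE ?x1_gt0 //; exact: r_lt_x1.
split.
  rewrite -[2 * K - 2^-1]invrK -/x0 ltf_pV2 ?posrE ?x0_gt0 //; exact: r_gt_x0.
have [c [c0 hc]] := lower_bound.
exists c, 1; split => //; split => // n.
have -> : (a n)%:R = b n * r^-1 ^+ n.
  by rewrite /b -mulrA -exprMn mulfV ?gt_eqF // expr1n mulr1.
have an0 : 0 <= r^-1 ^+ n by rewrite exprn_ge0 // invr_ge0 ltW.
split; first by apply: ler_wpM2r.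
by apply: ler_wpM2r => //; exact: b_le1.
Qed.

End Main.

Lemma SS0 k : SS k 0 = 0%N.
Proof. by rewrite /SS big_ord0. Qed.

Lemma SS1 k : SS k 1 = 0%N.
Proof. by rewrite /SS big_mkcond big_ord1. Qed.

Lemma num_palstarsE k n : num_palstars k (2 * n) = aa k n.
Proof. by rewrite /aa -mul2n; exact: card_W. Qed.

Theorem theorem3 (R : realType) (k : nat) (hk : (2 <= k)%N) :
  exists alpha : R,
    (2 * k%:R - 1 < alpha) /\ (alpha < 2 * k%:R - 2^-1) /\
    exists c1 c2 : R, 0 < c1 /\ 0 < c2 /\
      exists N : nat, forall n : nat, (N <= n)%N ->
        c1 * alpha ^+ n <= (num_palstars k (2 * n))%:R /\
        (num_palstars k (2 * n))%:R <= c2 * alpha ^+ n.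
Proof.
have k0 : (0 < k)%N by apply: leq_trans hk.
pose z : 'I_k := Ordinal k0.
have [alpha [h1 [h2 [c1 [c2 [hc1 [hc2 hb]]]]]]] :=
  final_bound R hk (pp0 k) (pp1 k) (@pp_le k) (@F4 k) (@F5 k z) (SS0 k) (SS1 k)
    (@SS_rec k) (aa0 k) (@aa_rec k z) (fun n => @aa_ge1 k z n k0).
exists alpha; split; first exact: h1.
split; first exact: h2.
exists c1, 1; split => //; split => //; exists 0%N => n _.
rewrite num_palstarsE; exact: hb n.
Qed.
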